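(* Let $n\ge 1$ and let $X_1,\dots,X_n$ be positive random variables that are jointly continuously distributed, such that each $X_k$ has an absolutely continuous distribution function $F_k$. Let $s>0$ and let $t=t(n,s)>0$ be the unique solution of $$\sum_{k=1}^n \int_0^{t} x\, dF_k(x) = s.$$ Let $N(n,s)$ and $S_{A(n,s)}$ be as defined in the context. Then $$\mathrm E(N(n,s)) \le \sum_{k=1}^n F_k(t(n,s)) - \frac{s-\mathrm E(S_{A(n,s)})}{t(n,s)}.$$
   Context: Define a total order on $\{X_1,\dots,X_n\}$ by $X_i\prec X_j$ if either $X_i<X_j$, or $X_i=X_j$ and $i<j$. Let $\pi$ be the unique permutation of $\{1,\dots,n\}$ with $X_{\pi(1)}\prec X_{\pi(2)}\prec\cdots\prec X_{\pi(n)}$. Let $A(n,s)=\{\pi(1),\dots,\pi(k)\}$ where $k$ is the largest integer in $\{0,1,\dots,n\}$ with $X_{\pi(1)}+\cdots+X_{\pi(k)}\le s$ (so $A(n,s)=\emptyset$ if $X_{\pi(1)}>s$). Then $N(n,s)=|A(n,s)|$ is the maximum number of observations among $X_1,\dots,X_n$ whose sum does not exceed $s$, and $S_{A(n,s)}=\sum_{i\in A(n,s)} X_i$. *)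

(* Defs.v *)
From HB Require Import structures.
From mathcomp Require Import all_boot all_order all_algebra.
From mathcomp Require Import all_classical all_reals all_analysis.
Set Implicit Arguments. Unset Strict Implicit. Unset Printing Implicit Defensive.
Import Order.TTheory GRing.Theory Num.Theory.
Local Open Scope classical_set_scope.
Local Open Scope ring_scope.

Section defs.
Variables (R : realType) (n : nat).

Definition prec_idx (x : 'I_n -> R) : rel 'I_n :=
  fun i j => (x i < x j) || ((x i == x j) && (i <= j)%N).

Definition sorted_idx (x : 'I_n -> R) : seq 'I_n := sort (prec_idx x) (enum 'I_n).

Definition kmax (x : 'I_n -> R) (s : R) : nat :=
  \max_(k < n.+1 | \sum_(i <- take k (sorted_idx x)) x i <= s) k.

Definition Aset (x : 'I_n -> R) (s : R) : {set 'I_n} :=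
  [set i in take (kmax x s) (sorted_idx x)].

Definition Ncount (x : 'I_n -> R) (s : R) : nat := #|Aset x s|.

Definition SA (x : 'I_n -> R) (s : R) : R := \sum_(i in Aset x s) x i.

Definition lebesgue_null (B : set ('I_n -> R)) : Prop :=
  forall e : R, 0 < e -> exists a b : nat -> 'I_n -> R,
    (forall j i, a j i <= b j i) /\
    B `<=` \bigcup_j [set x | forall i, a j i <= x i <= b j i] /\
    (forall m, \sum_(j < m) \prod_(i < n) (b j i - a j i) <= e).
End defs.

Definition abs_cont_fun (R : realType) (F : R -> R) : Prop :=
  forall e : R, 0 < e -> exists2 d : R, 0 < d &
    forall (m : nat) (a b : 'I_m -> R),
      (forall i, a i <= b i) ->
      (forall i j, i != j -> (b i <= a j) || (b j <= a i)) ->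
      \sum_(i < m) (b i - a i) < d ->
      \sum_(i < m) `|F (b i) - F (a i)| < e.

Definition distr_fun d (T : measurableType d) (R : realType)
  (P : probability T R) (Y : T -> R) (x : R) : R :=
  fine (P [set w | Y w <= x]).

(* Main.v *)
Require Import Defs.
From HB Require Import structures.
From mathcomp Require Import all_boot all_order all_algebra.
From mathcomp Require Import all_classical all_reals all_analysis.
From mathcomp Require Import lra.
Import Order.TTheory GRing.Theory Num.Theory.
Local Open Scope classical_set_scope.
Local Open Scope ring_scope.

Lemma pattern_meas d (T : measurableType d) (R : realType) (I : finType)
  (b : I -> T -> bool) (G : {ffun I -> bool} -> R) :
  (forall i, measurable_fun setT (b i)) ->
  measurable_fun setT (fun w => G [ffun i => b i w]).
Proof.
move=> mb _ Y mY; rewrite setTI.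
have -> : (fun w => G [ffun i => b i w]) @^-1` Y =
  \bigcup_(v in [set v | Y (G v)]) \bigcap_(i in [set: I]) (b i @^-1` [set v i]).
  apply/seteqP; split => w /=.
    move=> Yw; exists [ffun i => b i w] => //= i _; by rewrite ffunE.
  move=> [v /= Yv H]; suff -> : [ffun i => b i w] = v by [].
  by apply/ffunP => i; rewrite ffunE; exact: H.
apply: fin_bigcup_measurable; first exact: finite_finset.
move=> v _; apply: fin_bigcap_measurable; first exact: finite_finset.
move=> i _; rewrite -[_ @^-1` _]setTI; exact: mb.
Qed.

Section comb.
Variables (R : realType) (n : nat).
Definition Idx := ((('I_n * 'I_n) + ('I_n * 'I_n)) + {set 'I_n})%type.
Definition bpat (x : 'I_n -> R) (s : R) (p : Idx) : bool :=
  match p with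
  | inl (inl (i, j)) => x i < x j
  | inl (inr (i, j)) => x i == x j
  | inr A => \sum_(i in A) x i <= s
  end.
Definition AsetP (v : {ffun Idx -> bool}) : {set 'I_n} :=
  let L := sort (fun i j => v (inl (inl (i, j))) || v (inl (inr (i, j))) && (i <= j)%N)
             (enum 'I_n) in
  [set i in take (\max_(k < n.+1 | v (inr [set i in take k L])) k) L].

Lemma AsetPE x s : AsetP [ffun p => bpat x s p] = Aset x s.
Proof.
rewrite /AsetP /Aset /kmax /sorted_idx.
have -> : (fun i j => [ffun p => bpat x s p] (inl (inl (i, j))) ||
     [ffun p => bpat x s p] (inl (inr (i, j))) && (i <= j)%N) = prec_idx x.
  by apply/funext => i; apply/funext => j; rewrite !ffunE.
rewrite (eq_bigl (fun k : 'I_n.+1 => \sum_(i <- take k (sort (prec_idx x) (enum 'I_n))) x i <= s)) // => k.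
rewrite ffunE /= (big_uniq _ (take_uniq _ _)) ?sort_uniq ?enum_uniq //.
by congr (_ <= _); apply: eq_bigl => i; rewrite !inE.
Qed.
End comb.
Arguments AsetP {n}.
Arguments bpat {R n}.
Arguments AsetPE {R n}.

Lemma intDZ d (T : measurableType d) (R : realType) (mu : {measure set T -> \bar R})
  (f g : T -> R) (k : R) : 0 <= k -> (forall w, 0 <= f w) -> (forall w, 0 <= g w) ->
  measurable_fun setT f -> measurable_fun setT g ->
  (\int[mu]_w (f w)%:E + k%:E * \int[mu]_w (g w)%:E = \int[mu]_w (f w + k * g w)%:E)%E.
Proof.
move=> k0 f0 g0 mf mg.
have mf' := (measurable_realfun.measurable_EFinP setT f).2 mf.
have mg' := (measurable_realfun.measurable_EFinP setT g).2 mg.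
rewrite -ge0_integralZl //; last by move=> w _; rewrite lee_fin.
rewrite -ge0_integralD //.
- by move=> w _; rewrite lee_fin.
- by move=> w _; rewrite -EFinM lee_fin mulr_ge0.
- by apply: measurable_funeM; exact: mg'.
Qed.

Lemma ptwise (R : realType) (a b xx t : R) : 0 < t -> 0 < xx ->
  (a = 0 \/ a = 1) -> (b = (xx <= t)%R%:R) ->
  a + t^-1 * (xx * b) <= b + t^-1 * (xx * a).
Proof.
move=> t0 x0 ha ->; case: (lerP xx t) => hx; case: ha => -> /=;
  rewrite ?mulr0 ?mulr1 ?addr0 ?add0r //.
- by rewrite mulrC ler_pdivrMr // mul1r.
- by rewrite mulrC ler_pdivlMr // mul1r ltW.
Qed.

Theorem theorem3 (d : measure_display) (T : measurableType d) (R : realType)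
  (P : probability T R) (n : nat) (X : 'I_n -> {RV P >-> R}) (s t : R) :
  (1 <= n)%N ->
  (forall k w, 0 < X k w) ->
  (* jointly continuously distributed *)
  (forall B : set ('I_n -> R), lebesgue_null B ->
     P.-negligible [set w | B (fun k => X k w)]) ->
  (* each F_k absolutely continuous *)
  (forall k, abs_cont_fun (distr_fun P (X k))) ->
  0 < s ->
  0 < t ->
  (* t = t(n,s) is the unique solution of sum_k int_0^t x dF_k(x) = s *)
  (\sum_(k < n) \int[distribution P (X k)]_(x in `[0%R, t]%classic) x%:E)%E = s%:E ->
  (forall t', 0 < t' ->
     (\sum_(k < n) \int[distribution P (X k)]_(x in `[0%R, t']%classic) x%:E)%E = s%:E ->
     t' = t) ->
  ('E_P[fun w => (Ncount (fun k => X k w) s)%:R]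
    <= (\sum_(k < n) distr_fun P (X k) t)%:E
       - (s%:E - 'E_P[fun w => SA (fun k => X k w) s]) * (t^-1)%:E)%E.
Proof.
move=> _ Xpos _ _ s0 t0 hs _.
pose ind (i : 'I_n) w : R := (i \in Aset (fun k => X k w) s)%:R.
pose c (k : 'I_n) w : R := (X k w <= t)%R%:R.
have mX k : measurable_fun setT (X k) := measurable_funP (X k).
have mind i : measurable_fun setT (ind i).
  rewrite (_ : ind i = fun w => (i \in AsetP [ffun p => bpat (fun k => X k w) s p])%:R);
    last by apply/funext => w; rewrite AsetPE.
  apply: (@pattern_meas _ _ _ _ (fun p w => bpat (fun k => X k w) s p)
     (fun v => (i \in AsetP v)%:R)).
  case=> [[[i1 j]|[i1 j]]|A] /=.
  - exact: measurable_realfun.measurable_fun_ltr.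
  - exact: measurable_realfun.measurable_fun_eqr.
  - apply: measurable_realfun.measurable_fun_ler; last exact: measurable_cst.
    under eq_fun do rewrite big_mkcond /=.
    apply: measurable_sum => k; case: (k \in A) => //; exact: measurable_cst.
have mc k : measurable_fun setT (c k).
  rewrite (_ : c k = fun w => ([ffun _ : unit => X k w <= t] tt)%:R);
    last by apply/funext => w; rewrite ffunE.
  apply: (@pattern_meas _ _ _ _ (fun (_ : unit) w => X k w <= t) (fun v => (v tt)%:R)) => _.
  exact: measurable_realfun.measurable_fun_ler.
have ind01 i w : ind i w = 0 \/ ind i w = 1.
  by rewrite /ind; case: (i \in _); [right|left].
have ind0 i w : 0 <= ind i w by case: (ind01 i w) => ->.
have c0 k w : 0 <= c k w by rewrite /c; case: (X k w <= t)%R.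
have mXc k : measurable_fun setT (fun w => X k w * c k w) by exact: measurable_realfun.measurable_funM.
have mXi k : measurable_fun setT (fun w => X k w * ind k w) by exact: measurable_realfun.measurable_funM.
have EN : ('E_P[fun w => (Ncount (fun k => X k w) s)%:R])%E =
    (\sum_(i < n) \int[P]_w (ind i w)%:E)%E.
  rewrite expectation.unlock -ge0_integral_sum //; last first.
  - by move=> i w _; rewrite lee_fin.
  - by move=> i; exact: (measurable_realfun.measurable_EFinP setT (ind i)).2.
  apply: eq_integral => w _; rewrite sumEFin; congr EFin.
  rewrite /Ncount -sum1_card natr_sum big_mkcond; apply: eq_bigr => i _.
  by rewrite /ind; case: (i \in _).
have ES : ('E_P[fun w => SA (fun k => X k w) s])%E =
    (\sum_(i < n) \int[P]_w (X i w * ind i w)%:E)%E.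
  rewrite expectation.unlock -ge0_integral_sum //; last first.
  - by move=> i w _; rewrite lee_fin mulr_ge0 // ltW.
  - by move=> i; exact: (measurable_realfun.measurable_EFinP setT _).2.
  apply: eq_integral => w _; rewrite sumEFin; congr EFin.
  rewrite /SA big_mkcond; apply: eq_bigr => i _.
  by rewrite /ind; case: (i \in _); rewrite ?mulr1 ?mulr0.
have EF k : (\int[P]_w (c k w)%:E = (distr_fun P (X k) t)%:E)%E.
  have mS : measurable [set w | X k w <= t].
    have -> : [set w | X k w <= t] = X k @^-1` `]-oo, t].
      by apply/seteqP; split => w /=; rewrite in_itv.
    exact: measurable_funPTI.
  rewrite (_ : (fun w => (c k w)%:E) = fun w => (\1_[set w | X k w <= t] w)%:E); last first.
    by apply/funext => w; rewrite indicE mem_setE.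
  by rewrite integral_indic // setIT /distr_fun fineK // fin_num_measure.
have Em k : (\int[distribution P (X k)]_(x in `[0%R, t]%classic) x%:E =
    \int[P]_w (X k w * c k w)%:E)%E.
  rewrite integral_mkcond ge0_integral_distribution.
  - apply: eq_integral => w _ /=; rewrite /patch mem_setE in_itv /= (ltW (Xpos k w)) /c /=.
    by case: (X k w <= t)%R; rewrite ?mulr1 ?mulr0.
  - rewrite (_ : EFin \_ _ = fun y => (y * \1_(`[0%R, t]%classic) y)%:E); last first.
      apply/funext => y; rewrite /patch indicE; case: ifP => _; by rewrite ?mulr1 ?mulr0.
    apply/(measurable_realfun.measurable_EFinP setT _).2.
    by apply: measurable_realfun.measurable_funM => //.
  - move=> y; rewrite /patch; case: ifP => //; rewrite mem_setE in_itv /= => /andP[y0 _].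
    by rewrite lee_fin.
have Ei i : (\int[P]_w (ind i w)%:E + (t^-1)%:E * \int[P]_w (X i w * c i w)%:E <=
    \int[P]_w (c i w)%:E + (t^-1)%:E * \int[P]_w (X i w * ind i w)%:E)%E.
  rewrite !intDZ //; last 4 first.
  - by rewrite invr_ge0 ltW.
  - by move=> w; rewrite mulr_ge0 // ltW.
  - by rewrite invr_ge0 ltW.
  - by move=> w; rewrite mulr_ge0 // ltW.
  apply: ge0_le_integral => //.
  - move=> w _; rewrite lee_fin; apply: addr_ge0 => //; apply: mulr_ge0.
      by rewrite invr_ge0 ltW.
    by rewrite mulr_ge0 // ltW.
  - apply/(measurable_realfun.measurable_EFinP setT _).2.
    by apply: measurable_realfun.measurable_funD => //; apply: measurable_realfun.measurable_funM.
  - apply/(measurable_realfun.measurable_EFinP setT _).2.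
    by apply: measurable_realfun.measurable_funD => //; apply: measurable_realfun.measurable_funM.
  - move=> w _; rewrite lee_fin; apply: ptwise => //.
have key : (\sum_(i < n) \int[P]_w (ind i w)%:E + (t^-1)%:E * s%:E <=
    (\sum_(k < n) distr_fun P (X k) t)%:E +
    (t^-1)%:E * \sum_(i < n) \int[P]_w (X i w * ind i w)%:E)%E.
  have hs' : (\sum_(k < n) \int[P]_w (X k w * c k w)%:E)%E = s%:E.
    by rewrite -hs; apply: eq_bigr => k _; rewrite Em.
  rewrite -hs' -sumEFin !ge0_sume_distrr; last 2 first.
  - by move=> i _; apply: integral_ge0 => w _; rewrite lee_fin mulr_ge0 // ltW.
  - by move=> i _; apply: integral_ge0 => w _; rewrite lee_fin mulr_ge0 // ltW.
  rewrite -!big_split /=; apply: lee_sum => i _; rewrite -EF; exact: Ei.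
rewrite EN ES; move: key.
have A0 : (0 <= \sum_(i < n) \int[P]_w (ind i w)%:E)%E.
  by apply: sume_ge0 => i _; apply: integral_ge0 => w _; rewrite lee_fin.
have E0 : (0 <= \sum_(i < n) \int[P]_w (X i w * ind i w)%:E)%E.
  by apply: sume_ge0 => i _; apply: integral_ge0 => w _; rewrite lee_fin mulr_ge0 // ltW.
move: A0 E0.
case: (\sum_(i < n) \int[P]_w (X i w * ind i w)%:E)%E => [e| |] //; last first.
  move=> _ _ _; rewrite /= addeNy gt0_mulNye ?lte_fin ?invr_gt0 //.
  by rewrite /= leey.
case: (\sum_(i < n) \int[P]_w (ind i w)%:E)%E => [a| |] //.
move=> _ _; rewrite -!EFinM -!EFinD /= !lee_fin => h.
rewrite mulrBl (mulrC s) (mulrC e); lra.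
Qed.
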